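(* Let $G$ be a Garside group with Garside element $\Delta$, let $g\in G$, and let $a,b,k$ be nonzero integers. (i) If $g^{kb}$ is conjugate to $\Delta^{ka}$, then $g^b$ is conjugate to $\Delta^a$. (ii) If each of $g^a$ and $g^b$ is conjugate to a power of $\Delta$, then $g^{\gcd(a,b)}$ is conjugate to a power of $\Delta$.
   Context: $G$ is a Garside group: the group of fractions of a Garside monoid $G^+$ (an atomic, left and right cancellative monoid that is a lattice under both the prefix order and the suffix order, with a distinguished element $\Delta$, the Garside element, whose left and right divisors coincide, form a finite set, and generate $G^+$). *)

(* Defs.v *)
(* an abstract (possibly infinite) group with explicit axioms,
   and the Garside structure given by a submonoid P (= G^+) and Delta. *)
From Stdlib Require Import ZArith List.
Import ListNotations.

Record Group := {
  car :> Type;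
  gmul : car -> car -> car;
  gone : car;
  ginv : car -> car;
  gmulA : forall x y z, gmul x (gmul y z) = gmul (gmul x y) z;
  gmul1l : forall x, gmul gone x = x;
  gmul1r : forall x, gmul x gone = x;
  gmulVl : forall x, gmul (ginv x) x = gone;
  gmulVr : forall x, gmul x (ginv x) = gone
}.

Arguments gmul {g}.
Arguments gone {g}.
Arguments ginv {g}.

Section Defs.
Variable G : Group.

Definition gprod (l : list G) : G := fold_right gmul gone l.

Fixpoint gpow (x : G) (n : nat) : G :=
  match n with O => gone | S n => gmul x (gpow x n) end.

Definition zpow (x : G) (z : Z) : G :=
  match z with
  | Z0 => gone
  | Zpos p => gpow x (Pos.to_nat p)
  | Zneg p => ginv (gpow x (Pos.to_nat p))
  end.

Definition conjugate (x y : G) : Prop := exists h : G, gmul (ginv h) (gmul x h) = y.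

Variable P : G -> Prop.

Definition submonoid : Prop :=
  P gone /\ forall x y, P x -> P y -> P (gmul x y).

Inductive gen : G -> Prop :=
| gen_in : forall x, P x -> gen x
| gen_one : gen gone
| gen_mul : forall x y, gen x -> gen y -> gen (gmul x y)
| gen_inv : forall x, gen x -> gen (ginv x).

Definition prefix (a b : G) : Prop := exists c, P c /\ gmul a c = b.
Definition suffix (a b : G) : Prop := exists c, P c /\ gmul c a = b.

Definition atomic : Prop :=
  forall x, P x -> exists N : nat, forall l : list G,
    Forall (fun y => P y /\ y <> gone) l -> gprod l = x -> length l <= N.

Definition lattice_on (le : G -> G -> Prop) : Prop :=
  forall a b, P a -> P b ->
    (exists m, P m /\ le m a /\ le m b /\
       forall c, P c -> le c a -> le c b -> le c m) /\
    (exists j, P j /\ le a j /\ le b j /\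
       forall c, P c -> le a c -> le b c -> le j c).

Definition garside_element (D : G) : Prop :=
  P D /\
  (forall x, P x -> (prefix x D <-> suffix x D)) /\
  (exists l : list G, forall x, P x -> prefix x D -> In x l) /\
  (forall x, P x -> exists l : list G,
      Forall (fun y => P y /\ prefix y D) l /\ gprod l = x).

(* G is a Garside group: group of fractions of the Garside monoid P
   (P is a submonoid of G, hence cancellative, which generates G). *)
Definition garside_group (D : G) : Prop :=
  submonoid /\ (forall g, gen g) /\ atomic /\
  lattice_on prefix /\ lattice_on suffix /\ garside_element D.

End Defs.

(* Main.v *)
Require Import Defs.
From Stdlib Require Import ZArith List Lia Classical.
Import ListNotations.

Section GroupLemmas.
Variable G : Group.
Local Infix "**" := (@gmul G) (at level 40, left associativity).
Local Notation "1" := (@gone G).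

Lemma mul_cancel_l (x y z : G) : x ** y = x ** z -> y = z.
Proof. intro H. rewrite <- (gmul1l G y), <- (gmul1l G z), <- (gmulVl G x), <- !gmulA, H. reflexivity. Qed.

Lemma mul_cancel_r (x y z : G) : y ** x = z ** x -> y = z.
Proof. intro H. rewrite <- (gmul1r G y), <- (gmul1r G z), <- (gmulVr G x), !gmulA, H. reflexivity. Qed.

Lemma inv_unique (x y : G) : x ** y = 1 -> y = ginv x.
Proof. intro H. apply (mul_cancel_l x). rewrite H, gmulVr. reflexivity. Qed.

Lemma inv_mul (x y : G) : ginv (x ** y) = ginv y ** ginv x.
Proof. symmetry. apply inv_unique. rewrite <- gmulA, (gmulA _ y), gmulVr, gmul1l, gmulVr. reflexivity. Qed.

Lemma inv_inv (x : G) : ginv (ginv x) = x.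
Proof. symmetry. apply inv_unique. apply gmulVl. Qed.

Lemma inv_one : ginv 1 = (1 : G).
Proof. symmetry. apply inv_unique. apply gmul1l. Qed.

Lemma gpow_S_r (x : G) n : gpow G x (S n) = gpow G x n ** x.
Proof. induction n; simpl. rewrite gmul1r, gmul1l; auto.
  simpl in IHn. rewrite IHn, gmulA, IHn. reflexivity. Qed.

Lemma gpow_add (x : G) m n : gpow G x (m + n) = gpow G x m ** gpow G x n.
Proof. induction m; simpl. rewrite gmul1l; auto. rewrite IHm, gmulA; auto. Qed.

Lemma gpow_mul (x : G) m n : gpow G x (m * n) = gpow G (gpow G x m) n.
Proof. induction n; simpl. rewrite Nat.mul_0_r; auto.
  rewrite Nat.mul_succ_r, gpow_add, IHn. rewrite <- gpow_S_r. reflexivity. Qed.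

Lemma gpow_one n : gpow G 1 n = 1.
Proof. induction n; simpl; auto. rewrite IHn, gmul1l; auto. Qed.

Lemma comm_inv (c x : G) : c ** x = x ** c -> ginv c ** x = x ** ginv c.
Proof. intro H. apply (mul_cancel_l c). rewrite gmulA, gmulVr, gmul1l.
  rewrite gmulA, H, <- gmulA, gmulVr, gmul1r. reflexivity. Qed.

Lemma comm_gpow (c x : G) n : c ** x = x ** c -> gpow G c n ** x = x ** gpow G c n.
Proof. intro H. induction n; simpl. rewrite gmul1l, gmul1r; auto.
  rewrite <- gmulA, IHn, gmulA, H, gmulA. reflexivity. Qed.

Lemma gpow_comm_self (x : G) n : x ** gpow G x n = gpow G x n ** x.
Proof. symmetry. apply comm_gpow. reflexivity. Qed.

Lemma gpow_conj (x y : G) n : gpow G (ginv y ** x ** y) n = ginv y ** gpow G x n ** y.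
Proof. induction n; simpl. rewrite gmul1r, gmulVl; auto.
  rewrite IHn. rewrite <- !gmulA. f_equal. f_equal. rewrite gmulA, gmulVr, gmul1l. reflexivity. Qed.

Lemma inv_gpow (x : G) n : ginv (gpow G x n) = gpow G (ginv x) n.
Proof. induction n; simpl. apply inv_one. rewrite inv_mul, IHn. rewrite <- gpow_S_r. reflexivity. Qed.

Lemma zpow_char (x : G) z : zpow G x z =
  if (0 <=? z)%Z then gpow G x (Z.to_nat z) else ginv (gpow G x (Z.to_nat (- z))).
Proof. destruct z; simpl; auto. Qed.

Lemma zpow_nat (x : G) n : zpow G x (Z.of_nat n) = gpow G x n.
Proof. rewrite zpow_char. replace (0 <=? Z.of_nat n)%Z with true by (symmetry; apply Z.leb_le; lia).
  rewrite Nat2Z.id. auto. Qed.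

Lemma zpow_succ (x : G) z : zpow G x (Z.succ z) = zpow G x z ** x.
Proof. rewrite !zpow_char. destruct (Z.leb_spec 0 z).
  - replace (0 <=? Z.succ z)%Z with true by (symmetry; apply Z.leb_le; lia).
    replace (Z.to_nat (Z.succ z)) with (S (Z.to_nat z)) by lia. apply gpow_S_r.
  - destruct (Z.eq_dec z (-1)) as [->|Hne].
    + simpl. rewrite gmul1r, gmulVl. auto.
    + replace (0 <=? Z.succ z)%Z with false by (symmetry; apply Z.leb_gt; lia).
      replace (Z.to_nat (- z)) with (S (Z.to_nat (- Z.succ z))) by lia.
      simpl. rewrite inv_mul, <- gmulA, gmulVl, gmul1r. auto.
Qed.

Lemma zpow_add (x : G) m n : zpow G x (m + n) = zpow G x m ** zpow G x n.
Proof. revert n. apply Z.peano_ind.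
  - rewrite Z.add_0_r. simpl. rewrite gmul1r. auto.
  - intros n IH. rewrite Z.add_succ_r, !zpow_succ, IH, gmulA. auto.
  - intros n IH. apply (mul_cancel_r x). rewrite <- zpow_succ, <- gmulA, <- zpow_succ.
    replace (Z.succ (m + Z.pred n)) with (m + n)%Z by lia. rewrite Z.succ_pred. auto.
Qed.

Lemma zpow_one (x : G) : zpow G x 1 = x.
Proof. simpl. apply gmul1r. Qed.

Lemma zpow_opp (x : G) z : zpow G x (- z) = ginv (zpow G x z).
Proof. apply inv_unique. rewrite <- zpow_add. replace (z + - z)%Z with 0%Z by lia. auto. Qed.

Lemma zpow_mul (x : G) m n : zpow G x (m * n) = zpow G (zpow G x m) n.
Proof. revert n. apply Z.peano_ind.
  - rewrite Z.mul_0_r. auto.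
  - intros n IH. rewrite Z.mul_succ_r, zpow_add, zpow_succ, IH. auto.
  - intros n IH. apply (mul_cancel_r (zpow G x m)). rewrite <- zpow_add, <- zpow_succ.
    replace (m * Z.pred n + m)%Z with (m * n)%Z by lia. rewrite Z.succ_pred. auto.
Qed.

Lemma zpow_conj (x y : G) z : zpow G (ginv y ** x ** y) z = ginv y ** zpow G x z ** y.
Proof. destruct z; simpl. rewrite gmul1r, gmulVl; auto. apply gpow_conj.
  rewrite gpow_conj, !inv_mul, inv_inv, gmulA. auto. Qed.

Lemma comm_zpow (c x : G) z : c ** x = x ** c -> zpow G c z ** x = x ** zpow G c z.
Proof. intro H. destruct z; simpl. rewrite gmul1l, gmul1r; auto. apply comm_gpow; auto.
  apply comm_inv, comm_gpow; auto. Qed.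

Lemma zpow_comm_self (x : G) m n : zpow G x m ** zpow G x n = zpow G x n ** zpow G x m.
Proof. rewrite <- !zpow_add, Z.add_comm. auto. Qed.

Lemma zpow_gone z : zpow G 1 z = 1.
Proof. destruct z; simpl; rewrite ?gpow_one, ?inv_one; auto. Qed.

Lemma conj_trans (x y z : G) : conjugate G x y -> conjugate G y z -> conjugate G x z.
Proof. intros [h1 H1] [h2 H2]. exists (h1 ** h2). rewrite <- H2, <- H1, inv_mul, !gmulA. auto. Qed.

Lemma conj_sym (x y : G) : conjugate G x y -> conjugate G y x.
Proof. intros [h H]. exists (ginv h). rewrite <- H, inv_inv, !gmulA, gmulVr, gmul1l.
  rewrite <- !gmulA, gmulVr, gmul1r. auto. Qed.

Lemma conj_zpow (x y : G) z : conjugate G x y -> conjugate G (zpow G x z) (zpow G y z).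
Proof. intros [h H]. exists h. rewrite <- H, !gmulA, zpow_conj. auto. Qed.

End GroupLemmas.

Section Garside.
Variable G : Group.
Variable P : G -> Prop.
Variable D : G.
Hypothesis HG : garside_group G P D.
Local Infix "**" := (@gmul G) (at level 40, left associativity).

Lemma P1 : P gone.
Proof. destruct HG as [[H _] _]. exact H. Qed.
Lemma Pmul x y : P x -> P y -> P (x ** y).
Proof. destruct HG as [[_ H] _]. apply H. Qed.
Lemma PD : P D.
Proof. destruct HG as [_ [_ [_ [_ [_ [H _]]]]]]. exact H. Qed.
Lemma Pgpow x n : P x -> P (gpow G x n).
Proof. intro H; induction n; simpl. apply P1. apply Pmul; auto. Qed.

Definition simple (s : G) := P s /\ prefix G P s D.

Lemma P_decomp x : P x -> exists l, Forall simple l /\ gprod G l = x.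
Proof. destruct HG as [_ [_ [_ [_ [_ [_ [_ [_ H]]]]]]]]. exact (H x). Qed.

Lemma gen_all x : gen G P x.
Proof. destruct HG as [_ [H _]]. apply H. Qed.

Definition tau (x : G) := ginv D ** x ** D.

Lemma tau_simple s : simple s -> simple (tau s).
Proof.
  intros [Ps [c [Pc Hc]]].
  destruct HG as [_ [_ [_ [_ [_ [_ [Hps _]]]]]]].
  assert (Hs : suffix G P c D) by (exists s; auto).
  apply (Hps c Pc) in Hs. destruct Hs as [d [Pd Hd]].
  assert (E : tau s = d).
  { unfold tau. rewrite <- Hd at 2. rewrite !gmulA, <- (gmulA _ _ s c), Hc, gmulVl, gmul1l. auto. }
  rewrite E. split; auto. apply (Hps d Pd). exists c; auto.
Qed.

Lemma tau_mul x y : tau (x ** y) = tau x ** tau y.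
Proof. unfold tau. rewrite <- !gmulA. f_equal. f_equal. rewrite gmulA, gmulVr, gmul1l. auto. Qed.

Lemma tau_gprod l : tau (gprod G l) = gprod G (map tau l).
Proof. induction l; simpl. unfold tau. rewrite gmul1r, gmulVl; auto. rewrite tau_mul, IHl. auto. Qed.

Lemma Pgprod l : Forall P l -> P (gprod G l).
Proof. induction 1; simpl. apply P1. apply Pmul; auto. Qed.

Lemma tau_P x : P x -> P (tau x).
Proof. intro Hx. destruct (P_decomp x Hx) as [l [Hl <-]]. rewrite tau_gprod. apply Pgprod.
  clear Hx. induction Hl; simpl. constructor. constructor; auto. apply (tau_simple x H). Qed.

Definition taun n x := ginv (gpow G D n) ** x ** gpow G D n.

Lemma taun_S n x : taun (S n) x = taun n (tau x).
Proof. unfold taun, tau. simpl. rewrite inv_mul, !gmulA. auto. Qed.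

Lemma taun_add m n x : taun (m + n) x = taun n (taun m x).
Proof. unfold taun. rewrite gpow_add, inv_mul, !gmulA. auto. Qed.

Lemma taun_P n x : P x -> P (taun n x).
Proof. revert x; induction n; intros x Hx.
  unfold taun; simpl. rewrite inv_one, gmul1l, gmul1r; auto.
  rewrite taun_S. apply IHn, tau_P; auto. Qed.

Lemma taun_simple n x : simple x -> simple (taun n x).
Proof. revert x; induction n; intros x Hx.
  unfold taun; simpl. rewrite inv_one, gmul1l, gmul1r; auto.
  rewrite taun_S. apply IHn, tau_simple; auto. Qed.

Lemma taun_inj n x y : taun n x = taun n y -> x = y.
Proof. unfold taun. intro H. apply mul_cancel_r in H. apply mul_cancel_l in H. auto. Qed.

Lemma taun_period_mul j k x : taun j x = x -> taun (k * j) x = x.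
Proof. intro H. induction k; simpl. unfold taun; simpl. rewrite inv_one, gmul1l, gmul1r; auto.
  rewrite taun_add, H. auto. Qed.

Lemma simples_list : exists l : list G, forall x, simple x -> In x l.
Proof. destruct HG as [_ [_ [_ [_ [_ [_ [_ [H _]]]]]]]]. destruct H as [l Hl].
  exists l. intros x [Px Hx]. auto. Qed.

Lemma pigeon (f : nat -> G) (l : list G) :
  (forall i, In (f i) l) -> exists i j, i < j /\ f i = f j.
Proof.
  intro Hin. apply NNPP. intro Hn.
  assert (Hnd : NoDup (map f (seq 0 (S (length l))))).
  { apply (NoDup_nth _ (f 0)). rewrite length_map, length_seq. intros i j Hi Hj Heq.
    rewrite !(map_nth f (seq 0 (S (length l))) 0) in Heq.
    rewrite !seq_nth in Heq by auto. simpl in Heq.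
    destruct (Nat.lt_trichotomy i j) as [H|[H|H]]; auto; exfalso; apply Hn.
    exists i, j; auto. exists j, i; auto. }
  assert (incl (map f (seq 0 (S (length l)))) l).
  { intros y Hy. apply in_map_iff in Hy. destruct Hy as [i [<- _]]. auto. }
  pose proof (NoDup_incl_length Hnd H). rewrite length_map, length_seq in H0. lia.
Qed.

Lemma period s : simple s -> exists j, j >= 1 /\ taun j s = s.
Proof.
  intro Hs. destruct simples_list as [l Hl].
  destruct (pigeon (fun i => taun i s) l) as [i [j [Hij Heq]]].
  { intro i. apply Hl, taun_simple; auto. }
  exists (j - i). split. lia.
  replace j with ((j - i) + i) in Heq by lia. rewrite taun_add in Heq.
  apply taun_inj in Heq. auto.
Qed.

Lemma common_period (l : list G) : exists e, e >= 1 /\ forall x, In x l -> simple x -> taun e x = x.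
Proof.
  induction l as [|a l IH].
  - exists 1. split; auto. intros x [].
  - destruct IH as [e [He IH]]. destruct (classic (simple a)) as [Ha|Ha].
    + destruct (period a Ha) as [j [Hj Hja]]. exists (e * j). split. nia.
      intros x [<-|Hx] Hsx. apply taun_period_mul; auto.
      rewrite Nat.mul_comm. apply taun_period_mul; auto.
    + exists e. split; auto. intros x [<-|Hx] Hsx. contradiction. auto.
Qed.

Lemma global_period : exists e, e >= 1 /\ forall x, simple x -> taun e x = x.
Proof. destruct simples_list as [l Hl]. destruct (common_period l) as [e [He H]].
  exists e. split; auto. Qed.

Lemma central_of_period e : (forall x, simple x -> taun e x = x) ->
  forall x, gpow G D e ** x = x ** gpow G D e.
Proof.
  intros He.
  assert (Hs : forall s, simple s -> gpow G D e ** s = s ** gpow G D e).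
  { intros s Hs. specialize (He s Hs). unfold taun in He. rewrite <- He at 1.
    rewrite !gmulA, gmulVr, gmul1l. auto. }
  assert (HP : forall x, P x -> gpow G D e ** x = x ** gpow G D e).
  { intros x Hx. destruct (P_decomp x Hx) as [l [Hl <-]]. clear Hx. induction Hl; simpl.
    rewrite gmul1l, gmul1r; auto. rewrite gmulA, Hs by auto. rewrite <- gmulA, IHHl, gmulA. auto. }
  intro x. induction (gen_all x).
  - auto.
  - rewrite gmul1l, gmul1r; auto.
  - rewrite gmulA, IHg1, <- gmulA, IHg2, gmulA. auto.
  - symmetry. apply comm_inv. auto.
Qed.

Lemma antisym u : P u -> P (ginv u) -> u = gone.
Proof.
  intros Pu Pv. apply NNPP. intro Hne.
  destruct HG as [_ [_ [Hat _]]]. destruct (Hat gone P1) as [N HN].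
  set (l := concat (repeat [u; ginv u] (S N))).
  assert (Hl : Forall (fun y => P y /\ y <> gone) l).
  { unfold l. generalize (S N). induction n; simpl; auto. constructor.
    split; auto. constructor. split; auto. intro E. apply Hne. rewrite <- (inv_inv _ u), E, inv_one. auto. auto. }
  assert (Hp : gprod G l = gone).
  { unfold l. generalize (S N). induction n; simpl; auto. rewrite IHn, gmul1r, gmulVr. auto. }
  specialize (HN l Hl Hp).
  assert (length l = 2 * S N).
  { unfold l. generalize (S N). induction n; simpl; auto. rewrite IHn. lia. }
  lia.
Qed.

Lemma suffix_refl x : suffix G P x x.
Proof. exists gone. split. apply P1. apply gmul1l. Qed.

Lemma suffix_trans x y z : suffix G P x y -> suffix G P y z -> suffix G P x z.
Proof. intros [c [Pc Hc]] [d [Pd Hd]]. exists (d ** c). split. apply Pmul; auto.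
  rewrite <- gmulA, Hc. auto. Qed.

Lemma suffix_P x y : suffix G P x y -> P x -> P y.
Proof. intros [c [Pc <-]] Px. apply Pmul; auto. Qed.

Lemma suffix_antisym x y : suffix G P x y -> suffix G P y x -> x = y.
Proof. intros [c [Pc Hc]] [d [Pd Hd]].
  rewrite <- Hc, gmulA in Hd. rewrite <- (gmul1l G x) in Hd at 2. apply mul_cancel_r in Hd.
  apply inv_unique in Hd. subst c. assert (d = gone) by (apply antisym; auto).
  subst d. rewrite inv_one, gmul1l in Hc. auto. Qed.

Lemma list_join (L : list G) : L <> [] -> Forall P L ->
  exists J, P J /\ (forall y, In y L -> suffix G P y J) /\
    (forall c, P c -> (forall y, In y L -> suffix G P y c) -> suffix G P J c).
Proof.
  induction L as [|y L IH]; intros Hne HF. congruence.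
  inversion HF; subst. destruct L as [|z L'].
  - exists y. split; auto. split. intros y' [<-|[]]. apply suffix_refl.
    intros c Pc Hc. apply Hc. left; auto.
  - destruct IH as [J' [PJ' [UB LUB]]]; auto. congruence.
    destruct HG as [_ [_ [_ [_ [Hlat _]]]]]. destruct (Hlat y J' H1 PJ') as [_ [j [Pj [Hyj [HJj Hj]]]]].
    exists j. split; auto. split.
    + intros w [<-|Hw]. auto. apply suffix_trans with J'; auto.
    + intros c Pc Hc. apply Hj; auto. apply Hc; left; auto.
      apply LUB; auto. intros w Hw. apply Hc. right; auto.
Qed.

Lemma fixed_point (F : G -> G) (T : nat) (x0 : G) :
  (forall x y, suffix G P x y -> suffix G P (F x) (F y)) ->
  T >= 1 -> (forall x, Nat.iter T F x = x) ->
  (forall i, i < T -> P (Nat.iter i F x0)) ->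
  exists J, F J = J.
Proof.
  intros Hmon HT Hper HP.
  assert (Hmonk : forall k x y, suffix G P x y -> suffix G P (Nat.iter k F x) (Nat.iter k F y)).
  { induction k; simpl; auto. }
  set (L := map (fun i => Nat.iter i F x0) (seq 0 T)).
  destruct (list_join L) as [J [PJ [UB LUB]]].
  { unfold L. destruct T. lia. simpl. congruence. }
  { unfold L. apply Forall_forall. intros y Hy. apply in_map_iff in Hy.
    destruct Hy as [i [<- Hi]]. apply in_seq in Hi. apply HP. lia. }
  assert (Hall : forall i, suffix G P (Nat.iter i F x0) J).
  { intro i. induction i as [i IH] using (well_founded_induction lt_wf).
    destruct (Nat.lt_ge_cases i T).
    - apply UB. unfold L. apply in_map_iff. exists i. split; auto. apply in_seq. lia.
    - replace i with ((i - T) + T) by lia. rewrite Nat.iter_add, Hper. apply IH. lia. }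
  assert (Hx0 : P x0). { apply (HP 0). lia. }
  assert (H1 : suffix G P J (F J)).
  { apply LUB. apply suffix_P with x0; auto.
    replace x0 with (F (Nat.iter (T - 1) F x0)). apply Hmon; auto.
    rewrite <- Nat.iter_succ. replace (S (T - 1)) with T by lia. auto.
    intros y Hy. unfold L in Hy. apply in_map_iff in Hy. destruct Hy as [j [<- _]].
    rewrite <- (Hper x0) at 1. rewrite <- Nat.iter_add.
    replace (j + T) with (S (j + T - 1)) by lia. rewrite Nat.iter_succ. apply Hmon; auto. }
  assert (H2 : suffix G P J (Nat.iter (T - 1) F J)).
  { apply LUB. apply suffix_P with (Nat.iter (T - 1) F (Nat.iter 1 F x0)). apply Hmonk; auto.
    rewrite <- Nat.iter_add. replace (T - 1 + 1) with T by lia. rewrite Hper. auto.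
    intros y Hy. unfold L in Hy. apply in_map_iff in Hy. destruct Hy as [j [<- _]].
    replace (Nat.iter j F x0) with (Nat.iter (T - 1) F (Nat.iter (j + 1) F x0)). apply Hmonk; auto.
    rewrite <- Nat.iter_add. replace (T - 1 + (j + 1)) with (j + T) by lia.
    rewrite Nat.iter_add, Hper. auto. }
  exists J. apply suffix_antisym; auto.
  apply Hmon in H2. rewrite <- Nat.iter_succ in H2. replace (S (T - 1)) with T in H2 by lia.
  rewrite Hper in H2. auto.
Qed.

End Garside.

Section Core.
Variable G : Group.
Variable P : G -> Prop.
Variable D : G.
Hypothesis HG : garside_group G P D.
Variable e : nat.
Hypothesis He : e >= 1.
Hypothesis Hc : forall x, gmul (gpow G D e) x = gmul x (gpow G D e).
Local Infix "**" := (@gmul G) (at level 40, left associativity).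

Let Pm := Pmul G P D HG.
Let Pone := P1 G P D HG.
Let PDD := PD G P D HG.
Let Pgp := Pgpow G P D HG.

Lemma ZKc K x : gpow G (gpow G D e) K ** x = x ** gpow G (gpow G D e) K.
Proof. apply comm_gpow. apply Hc. Qed.

Lemma inv_simple_bound s : simple G P D s -> P (gpow G D e ** ginv s).
Proof.
  intros [Ps [c [Pc Hsc]]]. rewrite Hc.
  assert (E : ginv s = c ** ginv D).
  { rewrite <- Hsc, inv_mul, gmulA, gmulVr, gmul1l. reflexivity. }
  rewrite E. destruct e as [|e']. lia. simpl.
  rewrite <- gmulA, (gmulA _ (ginv D)), gmulVl, gmul1l. apply Pm; auto.
Qed.

Lemma inv_P_bound p : P p -> exists M, P (gpow G (gpow G D e) M ** ginv p).
Proof.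
  intro Hp. destruct (P_decomp G P D HG p Hp) as [l [Hl <-]]. clear Hp.
  induction Hl; simpl.
  - exists 0. simpl. rewrite inv_one, gmul1l. auto.
  - destruct IHHl as [M HM]. exists (M + 1). rewrite gpow_add, inv_mul. simpl.
    rewrite gmul1r. rewrite <- !gmulA. rewrite (gmulA _ (gpow G D e)), Hc, <- gmulA.
    rewrite !gmulA. rewrite <- (gmulA _ _ (gpow G D e)). apply Pm; auto.
    apply inv_simple_bound; auto.
Qed.

Lemma repr x : exists K, P (gpow G (gpow G D e) K ** x).
Proof.
  induction (gen_all G P D HG x).
  - exists 0. simpl. rewrite gmul1l. auto.
  - exists 0. simpl. rewrite gmul1l. auto.
  - destruct IHg1 as [K1 H1], IHg2 as [K2 H2]. exists (K1 + K2).
    rewrite gpow_add. rewrite !gmulA. rewrite <- (gmulA _ _ _ x), (ZKc K2 x), !gmulA.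
    rewrite <- (gmulA _ _ _ y). apply Pm; auto.
  - destruct IHg as [K HK]. destruct (inv_P_bound _ HK) as [M HM]. exists (K + M).
    assert (E1 : ginv x = ginv (gpow G (gpow G D e) K ** x) ** gpow G (gpow G D e) K).
    { rewrite inv_mul, <- gmulA, gmulVl, gmul1r. reflexivity. }
    rewrite gpow_add, E1.
    replace (gpow G (gpow G D e) K ** gpow G (gpow G D e) M **
      (ginv (gpow G (gpow G D e) K ** x) ** gpow G (gpow G D e) K)) with
      (gpow G (gpow G D e) K ** (gpow G (gpow G D e) M ** ginv (gpow G (gpow G D e) K ** x)) ** gpow G (gpow G D e) K)
      by (rewrite !gmulA; reflexivity).
    rewrite ZKc. apply Pm; [apply Pm|]; auto.
Qed.


Lemma repr_large x M : exists K, K >= M /\ P (gpow G (gpow G D e) K ** x).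
Proof. destruct (repr x) as [K HK]. exists (M + K). split. lia.
  rewrite gpow_add, <- gmulA. apply Pm; auto. Qed.

Lemma gpow_central_mul K x N :
  gpow G (gpow G (gpow G D e) K ** x) N = gpow G (gpow G (gpow G D e) K) N ** gpow G x N.
Proof. induction N; simpl. rewrite gmul1l; auto.
  rewrite IHN. rewrite !gmulA. f_equal. rewrite <- !gmulA. f_equal. symmetry. apply comm_gpow.
  apply ZKc. Qed.

Lemma core (r : G) (A N : nat) : P r -> N >= 1 -> gpow G r N = gpow G D (N * A) ->
  exists y, ginv y ** (r ** y) = gpow G D A.
Proof.
  intros Pr HN Heq.
  set (F := fun x => ginv (gpow G D A) ** x ** r).
  assert (Hmon : forall x y, suffix G P x y -> suffix G P (F x) (F y)).
  { intros x y [c [Pc Hcx]]. exists (taun G D A c). split. apply (taun_P G P D HG); auto.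
    unfold F, taun. rewrite <- Hcx. rewrite !gmulA.
    rewrite <- (gmulA _ _ (gpow G D A) (ginv (gpow G D A))), gmulVr, gmul1r. reflexivity. }
  assert (Hiter : forall i x, Nat.iter i F x = ginv (gpow G D (i * A)) ** x ** gpow G r i).
  { induction i; intro x. simpl. rewrite inv_one, gmul1l, gmul1r. auto.
    rewrite Nat.iter_succ, IHi. unfold F.
    replace (S i * A) with (i * A + A) by lia. rewrite gpow_add, inv_mul, gpow_S_r, !gmulA. auto. }
  destruct (fixed_point G P D HG F (N * e) (gpow G D (N * e * A)) Hmon) as [J HJ].
  - nia.
  - intro x. rewrite Hiter. rewrite (gpow_mul _ r N e), Heq, <- gpow_mul.
    replace (N * e * A) with (e * (N * A)) by nia.
    replace (N * A * e) with (e * (N * A)) by nia. rewrite gpow_mul.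
    rewrite <- gmulA, <- ZKc, gmulA, gmulVl, gmul1l. auto.
  - intros i Hi. rewrite Hiter.
    replace (N * e * A) with (i * A + (N * e * A - i * A)) by nia.
    rewrite gpow_add, gmulA, gmulVl, gmul1l. apply Pm; apply Pgp; auto.
  - exists (ginv J). rewrite inv_inv. apply (mul_cancel_l _ (ginv (gpow G D A))).
    rewrite gmulVl, !gmulA. unfold F in HJ. rewrite HJ, gmulVr. auto.
Qed.

Lemma key_pos (h : G) (n a : Z) : (n > 0)%Z -> zpow G h n = zpow G D (n * a) ->
  conjugate G h (zpow G D a).
Proof.
  intros Hn Heq.
  destruct (repr_large h (Z.to_nat (- a))) as [K [HK PK]].
  set (N := Z.to_nat n). set (A := Z.to_nat (a + Z.of_nat (e * K))).
  assert (En : n = Z.of_nat N) by (unfold N; lia).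
  assert (EA : Z.of_nat A = (a + Z.of_nat (e * K))%Z) by (unfold A; nia).
  destruct (core (gpow G (gpow G D e) K ** h) A N PK) as [y Hy].
  - lia.
  - rewrite gpow_central_mul. rewrite <- (gpow_mul _ (gpow G D e) K N), <- (gpow_mul _ D e (K*N)).
    rewrite <- (zpow_nat _ h N), <- En, Heq. rewrite <- !zpow_nat, <- zpow_add.
    f_equal. rewrite (Nat2Z.inj_mul N A), EA, En, !Nat2Z.inj_mul. ring.
  - exists y. apply (mul_cancel_l _ (gpow G (gpow G D e) K)).
    rewrite gmulA, (ZKc K (ginv y)), <- gmulA, (gmulA _ (gpow G (gpow G D e) K) h y), Hy.
    rewrite <- gpow_mul, <- !zpow_nat, <- zpow_add. f_equal. lia.
Qed.

Lemma key (h : G) (n a : Z) : n <> 0%Z -> conjugate G (zpow G h n) (zpow G D (n * a)) ->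
  conjugate G h (zpow G D a).
Proof.
  intros Hn [x Hx].
  set (h1 := ginv x ** h ** x).
  assert (Hh1 : zpow G h1 n = zpow G D (n * a)).
  { unfold h1. rewrite zpow_conj, <- Hx, !gmulA. auto. }
  assert (C1 : conjugate G h h1) by (exists x; unfold h1; rewrite gmulA; auto).
  apply (conj_trans _ _ h1); auto.
  destruct (proj1 (Z.lt_gt_cases n 0) Hn) as [Hlt|Hgt]; [|apply (key_pos h1 n a); auto].
  apply (key_pos h1 (- n) a). lia.
  rewrite zpow_opp, Hh1, <- zpow_opp. f_equal. ring. lia.
Qed.

Lemma pow_eq (p q : Z) : D <> gone -> conjugate G (zpow G D p) (zpow G D q) -> p = q.
Proof.
  intros HD [x Hx].
  set (E := Z.of_nat e).
  assert (Hz : forall t, zpow G D (E * t) = zpow G (gpow G D e) t).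
  { intro t. rewrite zpow_mul. unfold E. rewrite zpow_nat. auto. }
  assert (H1 : zpow G D (E * p) = zpow G D (E * q)).
  { apply (f_equal (fun w => zpow G w E)) in Hx. rewrite !gmulA, zpow_conj in Hx.
    rewrite <- !zpow_mul in Hx. rewrite (Z.mul_comm p), (Z.mul_comm q), Hz, Hz in Hx.
    rewrite Hz, Hz, <- Hx. rewrite <- gmulA, (comm_zpow _ _ x p (Hc x)), gmulA, gmulVl, gmul1l; auto. }
  assert (H2 : zpow G D (E * (p - q)) = gone).
  { apply (mul_cancel_r _ (zpow G D (E * q))). rewrite <- zpow_add, gmul1l.
    rewrite <- H1. f_equal. ring. }
  destruct (Z.eq_dec p q) as [|Hne]; auto. exfalso.
  assert (Hm : exists m, m >= 1 /\ gpow G D m = gone).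
  { rewrite zpow_char in H2. destruct (0 <=? E * (p - q))%Z eqn:Eb.
    - exists (Z.to_nat (E * (p - q))). split; auto. apply Z.leb_le in Eb. unfold E. nia.
    - exists (Z.to_nat (- (E * (p - q)))). split. apply Z.leb_gt in Eb. unfold E. nia.
      rewrite <- (inv_inv _ (gpow G D _)), H2, inv_one. auto. }
  destruct Hm as [m [Hm1 Hm]]. destruct m as [|m]. lia. simpl in Hm.
  apply inv_unique in Hm. apply HD. apply (antisym G P D HG); auto. rewrite <- Hm. apply Pgp; auto.
Qed.

End Core.

Theorem mainTheorem6 (G : Group) (P : G -> Prop) (D : G)
  (HG : garside_group G P D) (g : G) (a b k : Z)
  (ha : a <> 0%Z) (hb : b <> 0%Z) (hk : k <> 0%Z) :
  (conjugate G (zpow G g (k * b)) (zpow G D (k * a)) ->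
     conjugate G (zpow G g b) (zpow G D a)) /\
  ((exists m : Z, conjugate G (zpow G g a) (zpow G D m)) ->
   (exists m : Z, conjugate G (zpow G g b) (zpow G D m)) ->
   exists m : Z, conjugate G (zpow G g (Z.gcd a b)) (zpow G D m)).
Proof.
  destruct (global_period G P D HG) as [e [He Hper]].
  pose proof (central_of_period G P D HG e Hper) as Hc.
  split.
  - intro H. apply (key G P D HG e He Hc (zpow G g b) k a hk).
    rewrite <- zpow_mul, Z.mul_comm. auto.
  - intros [m1 H1] [m2 H2].
    set (d := Z.gcd a b).
    destruct (Z.gcd_divide_l a b) as [a' Ea]. destruct (Z.gcd_divide_r a b) as [b' Eb].
    fold d in Ea, Eb.
    assert (Hd : (0 < d)%Z).
    { pose proof (Z.gcd_nonneg a b). assert (d <> 0%Z). { intro E0. apply Z.gcd_eq_0_l in E0. lia. } lia. }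
    assert (Ha' : a' <> 0%Z) by (intro H0; rewrite H0 in Ea; lia).
    assert (Hg1 : Z.gcd a' b' = 1%Z).
    { pose proof (Z.gcd_mul_mono_r a' b' d) as Hm. rewrite <- Ea, <- Eb in Hm. fold d in Hm.
      rewrite Z.abs_eq in Hm by lia. pose proof (Z.gcd_nonneg a' b'). nia. }
    assert (Hga : zpow G (zpow G g d) a' = zpow G g a).
    { rewrite <- zpow_mul, Ea, Z.mul_comm. auto. }
    destruct (classic (D = gone)) as [HD|HD].
    + exists 0%Z. apply (key G P D HG e He Hc (zpow G g d) a' 0 Ha').
      rewrite Hga. rewrite HD in *. rewrite !zpow_gone in *. auto.
    + assert (C1 : conjugate G (zpow G g (a * b')) (zpow G D (m1 * b'))).
      { rewrite !zpow_mul. apply conj_zpow. auto. }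
      assert (C2 : conjugate G (zpow G g (b * a')) (zpow G D (m2 * a'))).
      { rewrite !zpow_mul. apply conj_zpow. auto. }
      assert (Eab : (a * b' = b * a')%Z) by (rewrite Ea, Eb; ring).
      rewrite Eab in C1.
      assert (Em : (m1 * b' = m2 * a')%Z).
      { apply (pow_eq G P D HG e He Hc); auto.
        apply conj_trans with (zpow G g (b * a')). apply conj_sym; auto. auto. }
      assert (Hdiv : (a' | m1)%Z).
      { apply (Z.gauss a' b' m1); auto. exists m2. rewrite Z.mul_comm, Em. auto. }
      destruct Hdiv as [c Ec]. exists c.
      apply (key G P D HG e He Hc (zpow G g d) a' c Ha').
      rewrite Hga. replace (a' * c)%Z with m1 by (rewrite Ec; ring). auto.
Qed.
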